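(* Consider a classification task in which the unlabeled graph $\overline G$ has support $\overline{\mathcal G}$ equal to all graphs on $n\in\mathbb N$ vertices, the edges of $\overline G$ are jointly independent, and $\mathbf X\in\mathcal Z^{n\times d}$ for a finite set $\mathcal Z$. Fix a subgraph $g_{exp}$ and let the label be $Y=\mathds 1(g_{exp}\subseteq\overline G)$ (a deterministic task). Let $f(\overline G)$ be the classifier that outputs label $\mathds 1(g_{exp}\subseteq\overline G)$ with probability one. For $p\in[0,1]$, let $\Psi_p$ be the (stochastic) explanation function with $P(\Psi_p(\overline g)=g_{exp}\mid g_{exp}\subseteq\overline g)=p$ and $P(\Psi_p(\overline g)=\phi\mid g_{exp}\subseteq\overline g)=1-p$, where $\phi$ is the empty graph, and let $\mathcal S=\{\Psi_p:p\in[0,1]\}$. Then the fidelity measure $Fid_\Delta$ is well-behaved for $\{f\}$ and $\mathcal S$.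
   Context: Graph data: a random labeled graph $G=(\mathcal V,\mathcal E;Y,\mathbf X,\mathbf A)$ with unlabeled version $\overline G$. A classifier $f$ maps an unlabeled graph to a distribution on labels; $\widehat Y\sim f(\overline G)$. An explanation function $\Psi$ maps $\overline G$ to a subgraph $\Psi(\overline G)$ of it. For an explanation function $\Psi$, $$I(\widehat Y;\overline G\mid\mathds 1_{\Psi(\overline G)})\triangleq\sum_{g'}P_{\Psi(\overline G)}(g')\sum_{y,\overline g}P_{\widehat Y,\overline G}(y,\overline g|g'\subseteq\overline G)\log\frac{P_{\widehat Y,\overline G}(y,\overline g|g'\subseteq\overline G)}{P_{\widehat Y}(y|g'\subseteq\overline G)P_{\overline G}(\overline g|g'\subseteq\overline G)}.$$ Fidelity measures: let $\widehat P(\cdot)$ be the distribution $f(\overline G)$, $\widehat P^+(\cdot)$ the distribution $f(\overline G-\Psi(\overline G))$ where $\overline G-\Psi(\overline G)$ is the subgraph with edge set $\mathcal E\setminus\mathcal E_{exp}$, and $\widehat P^-(\cdot)$ the distribution $f(\Psi(\overline G))$. Define $Fid_+=\mathbb E[\widehat P(Y)-\widehat P^+(Y)]$, $Fid_-=\mathbb E[\widehat P(Y)-\widehat P^-(Y)]$, $Fid_\Delta=Fid_+-Fid_-$ (expectation over $(\overline G,Y)$ and randomness of $\Psi$). A fidelity measure $Fid(f,\Psi)$ is well-behaved for a set of classifiers $\mathcal F$ and explanation functions $\mathcal S$ if for all $f\in\mathcal F$ and $\Psi_1,\Psi_2\in\mathcal S$: $I(\widehat Y;\overline G|\mathds 1_{\Psi_1(\overline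 G)})\le I(\widehat Y;\overline G|\mathds 1_{\Psi_2(\overline G)})$ if and only if $Fid(f,\Psi_2)\le Fid(f,\Psi_1)$. *)

(* Defs.v *)
From HB Require Import structures.
From mathcomp Require Import all_boot all_order all_algebra.
From mathcomp Require Import reals exp.

Set Implicit Arguments.
Unset Strict Implicit.
Unset Printing Implicit Defensive.

Import Order.TTheory GRing.Theory Num.Theory.
Local Open Scope ring_scope.

(** Potential edges of a simple undirected graph on vertex set 'I_n:
    unordered pairs {i,j}, encoded as (i,j) with i < j. *)
Definition edge (n : nat) : finType := {e : 'I_n * 'I_n | (e.1 < e.2)%N}.

(** An unlabeled graph on n vertices with node features in Z^{n x d}:
    its edge set together with its feature matrix.  The adjacency matrix
    is determined by the edge set. *)
Definition ugraph (n d : nat) (Z : finType) : finType :=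
  ({set edge n} * 'M[Z]_(n, d))%type.

(** A subgraph of [h] is described by its edge set [S] (a subset of the
    edges of [h]); it keeps the vertex set and node features of [h]. *)
Definition subg n d Z (h : ugraph n d Z) (S : {set edge n}) : ugraph n d Z :=
  (S, h.2).

Definition remg n d Z (h : ugraph n d Z) (S : {set edge n}) : ugraph n d Z :=
  (h.1 :\: S, h.2).

Definition is_pmf (R : realType) (T : finType) (P : T -> R) : Prop :=
  (forall t, 0 <= P t) /\ \sum_t P t = 1.

Section Info.
Variables (R : realType) (n d : nat) (Z : finType).
Local Notation G := (ugraph n d Z).
Local Notation ES := {set edge n}.

(** Classifiers: [f h] is a distribution on labels (bool).
    Explanation functions: [K h] is a distribution on subgraphs (edge sets)
    of [h].  [P] is the distribution of the unlabeled graph Gbar. *)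

Definition PPsi (P : G -> R) (K : G -> ES -> R) (S : ES) : R :=
  \sum_(h : G) P h * K h S.

Definition Pev (P : G -> R) (S : ES) : R := \sum_(h : G | S \subset h.1) P h.

Definition Pc (P : G -> R) (f : G -> bool -> R) (S : ES) (y : bool) (h : G) : R :=
  if S \subset h.1 then P h * f h y / Pev P S else 0.

Definition PcY P f S (y : bool) : R := \sum_h Pc P f S y h.
Definition PcG P f S (h : G) : R := \sum_y Pc P f S y h.

(** I(Yhat ; Gbar | 1_{Psi(Gbar)}) *)
Definition cmi (P : G -> R) (f : G -> bool -> R) (K : G -> ES -> R) : R :=
  \sum_S PPsi P K S *
    \sum_y \sum_h Pc P f S y h *
        ln (Pc P f S y h / (PcY P f S y * PcG P f S h)).

(** Fidelities; [pY h y] = P(Y = y | Gbar = h) is the label distribution. *)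
Definition Fid_plus (P : G -> R) (pY : G -> bool -> R)
    (f : G -> bool -> R) (K : G -> ES -> R) : R :=
  \sum_(h : G) \sum_y P h * pY h y *
     \sum_S K h S * (f h y - f (remg h S) y).

Definition Fid_minus (P : G -> R) (pY : G -> bool -> R)
    (f : G -> bool -> R) (K : G -> ES -> R) : R :=
  \sum_(h : G) \sum_y P h * pY h y *
     \sum_S K h S * (f h y - f (subg h S) y).

Definition Fid_delta P pY f K : R := Fid_plus P pY f K - Fid_minus P pY f K.

Definition well_behaved
    (Fid : (G -> bool -> R) -> (G -> ES -> R) -> R)
    (I : (G -> bool -> R) -> (G -> ES -> R) -> R)
    (F : (G -> bool -> R) -> Prop) (S : (G -> ES -> R) -> Prop) : Prop :=
  forall f Psi1 Psi2, F f -> S Psi1 -> S Psi2 ->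
    (I f Psi1 <= I f Psi2 <-> Fid f Psi2 <= Fid f Psi1).

Definition edges_indep (P : G -> R) : Prop :=
  forall T : ES, \sum_(h : G | T \subset h.1) P h =
                 \prod_(e in T) \sum_(h : G | e \in h.1) P h.

Definition full_support (P : G -> R) : Prop :=
  forall S : ES, 0 < \sum_(h : G | h.1 == S) P h.

Definition expl_ok (K : G -> ES -> R) : Prop :=
  forall h, is_pmf (K h) /\ (forall S : ES, ~~ (S \subset h.1) -> K h S = 0).

Definition lab_exp (gexp : ES) (h : G) : bool := gexp \subset h.1.

Definition f_exp (gexp : ES) : G -> bool -> R :=
  fun h y => (y == lab_exp gexp h)%:R.

(** Psi_p: on graphs containing g_exp, outputs g_exp w.p. p and the empty
    graph w.p. 1-p; on other graphs it follows a fixed (p-independent)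
    explanation [psi0]. *)
Definition Psi_p (gexp : ES) (psi0 : G -> ES -> R) (p : R) : G -> ES -> R :=
  fun h S => if gexp \subset h.1
             then p * (S == gexp)%:R + (1 - p) * (S == set0)%:R
             else psi0 h S.

End Info.

(* Main.v *)
Require Import Defs.
From HB Require Import structures.
From mathcomp Require Import all_boot all_order all_algebra.
From mathcomp Require Import reals exp ring lra.
Import Order.TTheory GRing.Theory Num.Theory.
Local Open Scope ring_scope.
Set Implicit Arguments. Unset Strict Implicit. Unset Printing Implicit Defensive.

Section Aux.
Variables (R : realType) (n d : nat) (Z : finType).
Local Notation G := (ugraph n d Z).
Local Notation ES := {set edge n}.

Lemma sum_ind (F : ES -> R) (a : ES) : \sum_S (S == a)%:R * F S = F a.
Proof.
rewrite (bigD1 a) //= eqxx mul1r big1 ?addr0 // => S /negbTE ->.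
by rewrite mul0r.
Qed.

Lemma L_diff (P : G -> R) (W : G -> ES -> R) gexp psi0 (p1 p2 : R) :
  \sum_(h : G) \sum_(S : ES) P h * Psi_p gexp psi0 p1 h S * W h S -
  \sum_(h : G) \sum_(S : ES) P h * Psi_p gexp psi0 p2 h S * W h S =
  (p1 - p2) * \sum_(h : G | gexp \subset h.1) P h * (W h gexp - W h set0).
Proof.
rewrite -sumrB mulr_sumr [RHS]big_mkcond /=.
apply: eq_bigr => h _.
rewrite -sumrB /Psi_p; case: ifP => H.
  rewrite (eq_bigr (fun S => (p1 - p2) * P h * ((S == gexp)%:R * W h S) -
                             (p1 - p2) * P h * ((S == set0)%:R * W h S))); last first.
    by move=> S _; ring.
  by rewrite sumrB -!mulr_sumr !sum_ind; ring.
by rewrite big1 ?mulr0 // => S _; rewrite subrr.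
Qed.

Definition Iterm (P : G -> R) (f : G -> bool -> R) (S : ES) : R :=
  \sum_y \sum_h Pc P f S y h * ln (Pc P f S y h / (PcY P f S y * PcG P f S h)).

Lemma cmiE P f K :
  cmi P f K = \sum_h \sum_S P h * K h S * Iterm P f S.
Proof.
rewrite /cmi exchange_big /=; apply: eq_bigr => S _.
by rewrite /PPsi mulr_suml.
Qed.

Definition Wf (pY f : G -> bool -> R) (h : G) (S : ES) : R :=
  \sum_y pY h y * ((f h y - f (remg h S) y) - (f h y - f (subg h S) y)).

Lemma FidE P pY f K :
  Fid_delta P pY f K = \sum_h \sum_S P h * K h S * Wf pY f h S.
Proof.
rewrite /Fid_delta /Fid_plus /Fid_minus -sumrB; apply: eq_bigr => h _.
rewrite -sumrB /Wf.
under eq_bigr do rewrite -mulrBr -sumrB mulr_sumr.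
rewrite exchange_big /=; apply: eq_bigr => S _.
rewrite mulr_sumr; apply: eq_bigr => y _; ring.
Qed.

Lemma fin_lem (x1 x2 y1 y2 dl k1 k2 : R) :
  x1 - x2 = dl * k1 -> y1 - y2 = dl * k2 ->
  (k1 = 0 /\ k2 = 0) \/ (k1 < 0 /\ 0 < k2) -> (x1 <= x2 <-> y2 <= y1).
Proof.
move=> e1 e2 [[k10 k20]|[k1n k2p]].
  rewrite k10 mulr0 in e1; rewrite k20 mulr0 in e2.
  have -> : x1 = x2 by apply/eqP; rewrite -subr_eq0 e1.
  have -> : y1 = y2 by apply/eqP; rewrite -subr_eq0 e2.
  by rewrite !lexx.
split=> H.
  have : 0 <= dl * k1 * k1 by rewrite -e1; nra.
  move=> h1; have hd : 0 <= dl by nra.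
  nra.
have hd : 0 <= dl by nra.
nra.
Qed.

End Aux.

Theorem proposition3 (R : realType) (n d : nat) (Z : finType)
  (P : ugraph n d Z -> R)
  (hP : is_pmf P) (hind : edges_indep P) (hsupp : full_support P)
  (gexp : {set edge n})
  (psi0 : ugraph n d Z -> {set edge n} -> R) (hpsi0 : expl_ok psi0) :
  well_behaved (Fid_delta P (@f_exp R n d Z gexp)) (cmi P)
    (fun f => f = @f_exp R n d Z gexp)
    (fun Psi => exists p : R, 0 <= p <= 1 /\ Psi = Psi_p gexp psi0 p).
Proof.
move=> f K1 K2 -> [p1 [hp1 ->]] [p2 [hp2 ->]].
have P0 : forall h, 0 <= P h by case: hP.
have P1 : \sum_h P h = 1 by case: hP.
pose a := Pev P gexp.
have a_gt0 : 0 < a.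
  apply: (lt_le_trans (hsupp gexp)).
  rewrite /a /Pev [X in _ <= X]big_mkcond [X in X <= _]big_mkcond /=.
  apply: ler_sum => h _; case: eqP => [->|_]; first by rewrite subxx.
  by case: ifP.
have Itg : Iterm P (@f_exp R n d Z gexp) gexp = 0.
  rewrite /Iterm big1 // => y _; rewrite big1 // => h _.
  case: (Pc P (@f_exp R n d Z gexp) gexp y h =P 0) => [->|nz]; first by rewrite mul0r.
  have H : gexp \subset h.1 by move: nz; rewrite /Pc; case: ifP.
  have yt : y = true.
    move: nz; rewrite /Pc H /f_exp /lab_exp H.
    by case: y => //; rewrite /= mulr0 mul0r.
  subst y.
  have hY : PcY P (@f_exp R n d Z gexp) gexp true = 1.
    rewrite /PcY /Pc.
    under eq_bigr do rewrite /f_exp /lab_exp.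
    rewrite -big_mkcond /=.
    under eq_bigr => h' Hh' do rewrite Hh' /= mulr1.
    by rewrite -mulr_suml divff // gt_eqF.
  have hG : PcG P (@f_exp R n d Z gexp) gexp h = Pc P (@f_exp R n d Z gexp) gexp true h.
    by rewrite /PcG big_bool /= /Pc H /f_exp /lab_exp H /= mulr0 mul0r addr0.
  by rewrite hG hY mul1r divff ?ln1 ?mulr0 //; apply/eqP.
have Ec := L_diff P (fun _ S => Iterm P (@f_exp R n d Z gexp) S) gexp psi0 p1 p2.
have EF := L_diff P (Wf (@f_exp R n d Z gexp) (@f_exp R n d Z gexp)) gexp psi0 p1 p2.
rewrite !cmiE !FidE.
apply: (fin_lem Ec EF).
rewrite /= Itg.
have Wd : forall h : ugraph n d Z, gexp \subset h.1 ->
    Wf (@f_exp R n d Z gexp) (@f_exp R n d Z gexp) h gexp - Wf (@f_exp R n d Z gexp) (@f_exp R n d Z gexp) h set0 =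
    (1 - (true == (gexp \subset h.1 :\: gexp))%:R) -
    ((true == (gexp \subset set0))%:R - 1).
  move=> h H; rewrite /Wf !big_bool /f_exp /lab_exp /= H /= setD0 H subxx /=.
  ring.
have [g0|gne] := eqVneq gexp set0.
  left; split.
    by move: Itg; rewrite g0 => ->; rewrite subrr big1 // => h _; rewrite mulr0.
  by rewrite big1 // => h H; rewrite Wd // g0 !sub0set /= subrr mulr0.
have a_lt1 : a < 1.
  have E1 : 1 - a = \sum_(h : ugraph n d Z | ~~ (gexp \subset h.1)) P h.
    by rewrite -P1 (bigID (fun h : ugraph n d Z => gexp \subset h.1)) /= addrC addrK.
  suff : 0 < 1 - a by rewrite subr_gt0.
  rewrite E1; apply: (lt_le_trans (hsupp set0)).
  rewrite [X in _ <= X]big_mkcond [X in X <= _]big_mkcond /=.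
  apply: ler_sum => h _; case: eqP => [->|_].
    by rewrite subset0 gne.
  by case: ifP.
have Ev : Pev P set0 = 1.
  by rewrite /Pev (eq_bigl (fun _ => true)) // => h; rewrite sub0set.
have PcE : forall y h, Pc P (@f_exp R n d Z gexp) set0 y h = P h * (@f_exp R n d Z gexp) h y.
  by move=> y h; rewrite /Pc sub0set Ev divr1.
have PcGE : forall h, PcG P (@f_exp R n d Z gexp) set0 h = P h.
  move=> h; rewrite /PcG big_bool /= !PcE /f_exp.
  by case: (lab_exp gexp h); rewrite /= ?mulr0 ?mulr1 ?addr0 ?add0r.
have qT : PcY P (@f_exp R n d Z gexp) set0 true = a.
  rewrite /PcY /a /Pev [RHS]big_mkcond /=; apply: eq_bigr => h _.
  by rewrite PcE /f_exp /lab_exp; case: ifP; rewrite /= ?mulr1 ?mulr0.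
have qF : PcY P (@f_exp R n d Z gexp) set0 false = 1 - a.
  rewrite -qT -P1 /PcY -sumrB; apply: eq_bigr => h _.
  rewrite !PcE /f_exp; case: (lab_exp gexp h); rewrite /= ?mulr1 ?mulr0; ring.
have I0 : 0 < Iterm P (@f_exp R n d Z gexp) set0.
  have T : forall y h, 0 < PcY P (@f_exp R n d Z gexp) set0 y ->
      Pc P (@f_exp R n d Z gexp) set0 y h *
      ln (Pc P (@f_exp R n d Z gexp) set0 y h /
          (PcY P (@f_exp R n d Z gexp) set0 y * PcG P (@f_exp R n d Z gexp) set0 h)) =
      Pc P (@f_exp R n d Z gexp) set0 y h * - ln (PcY P (@f_exp R n d Z gexp) set0 y).
    move=> y h qp.
    case: (Pc P (@f_exp R n d Z gexp) set0 y h =P 0) => [->|nz]; first by rewrite !mul0r.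
    have f1 : (@f_exp R n d Z gexp) h y = 1.
      move: nz; rewrite PcE /f_exp; case: (y == _) => //=; by rewrite mulr0.
    have Ph : P h != 0 by apply/eqP => Ph0; apply: nz; rewrite PcE Ph0 mul0r.
    rewrite PcGE PcE f1 mulr1 invfM mulrCA divff // mulr1 lnV //.
  rewrite /Iterm big_bool /=.
  have qTp : 0 < PcY P (@f_exp R n d Z gexp) set0 true by rewrite qT.
  have qFp : 0 < PcY P (@f_exp R n d Z gexp) set0 false by rewrite qF subr_gt0.
  rewrite (eq_bigr _ (fun h _ => T true h qTp)) (eq_bigr _ (fun h _ => T false h qFp)).
  rewrite -!mulr_suml -/(PcY P (@f_exp R n d Z gexp) set0 true) -/(PcY P (@f_exp R n d Z gexp) set0 false) qT qF.
  apply: addr_gt0; apply: mulr_gt0; rewrite ?subr_gt0 // oppr_gt0 ln_lt0 //.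
    by rewrite a_gt0 a_lt1.
  by rewrite subr_gt0 a_lt1 /= ltrBlDr ltrDl.
right; split.
  by rewrite -mulr_suml sub0r mulrN oppr_lt0 mulr_gt0.
rewrite (eq_bigr (fun h => P h * 2)); last first.
  move=> h H; rewrite Wd // subset0 (negbTE gne).
  have -> : (gexp \subset h.1 :\: gexp) = false.
    apply/negbTE/negP => sub; case/set0Pn: gne => x xg.
    by have := subsetP sub x xg; rewrite in_setD xg.
  rewrite /=; congr (_ * _); ring.
by rewrite -mulr_suml mulr_gt0.
Qed.
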